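(* Consider problem (VP) under the standing assumptions at $\bar x\in Q_0$. Let $\bar x$ be a local Geoffrion properly efficient solution of (VP), and suppose $L^2(Q;\bar x,u)\subset T^2(Q_0;\bar x,u)$ for every critical direction $u\in\mathcal{C}(\bar x)$. Then there is no pair $(u,v)\in X\times X$ such that $F_i^2(\bar x;u,v)\leqq_{\rm lex}(0,0)$ for all $i\in I$, $F_i^2(\bar x;u,v)<_{\rm lex}(0,0)$ for at least one $i\in I(\bar x;u)$, and $G_j^2(\bar x;u,v)\leqq_{\rm lex}(0,0)$ for all $j\in J(\bar x)$.
   Context: Standing setting: $X$ is a Banach space; $I=\{1,\dots,p\}$, $J=\{1,\dots,m\}$; $f_i,g_j\colon X\to\mathbb{R}$; (VP) minimizes $f=(f_1,\dots,f_p)$ over $Q_0:=\{x\in X: g_j(x)\leqq 0,\ j\in J\}$. $J(\bar x):=\{j\in J: g_j(\bar x)=0\}$. Standing assumptions: $f_i$ ($i\in I$), $g_j$ ($j\in J(\bar x)$) locally Lipschitz at $\bar x$; $g_j$ ($j\notin J(\bar x)$) continuous at $\bar x$. $F^{\circ}(\bar x,u):=\limsup_{x\to\bar x,\,t\downarrow0}\frac{F(x+tu)-F(x)}{t}$; $F^{\circ\circ}(\bar x,u):=\limsup_{t\downarrow0}\frac{F(\bar x+tu)-F(\bar x)-tF^{\circ}(\bar x,u)}{\frac12t^2}$. Lexicographic order on $\mathbb{R}^2$: $a\leqq_{\rm lex}b$ iff $a_1<b_1$ or ($a_1=b_1$, $a_2\leqq b_2$); $a<_{\rm lex}b$ iff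 $a_1<b_1$ or ($a_1=b_1$, $a_2<b_2$). $F_i^2(\bar x;u,v):=(f_i^{\circ}(\bar x,u),\, f_i^{\circ}(\bar x,v)+f_i^{\circ\circ}(\bar x,u))$, $G_j^2(\bar x;u,v):=(g_j^{\circ}(\bar x,u),\, g_j^{\circ}(\bar x,v)+g_j^{\circ\circ}(\bar x,u))$; $I(\bar x;u):=\{i\in I: f_i^{\circ}(\bar x,u)=0\}$. $Q:=Q_0\cap\{x: f_i(x)\leqq f_i(\bar x),\ i\in I\}$; $L^2(Q;\bar x,u):=\{v: F_i^2(\bar x;u,v)\leqq_{\rm lex}(0,0)\ \forall i\in I,\ G_j^2(\bar x;u,v)\leqq_{\rm lex}(0,0)\ \forall j\in J(\bar x)\}$. $T^2(\Omega;\bar x,u):=\{v: \exists t_k\downarrow0,\ \exists v^k\to v,\ \bar x+t_ku+\frac12t_k^2v^k\in\Omega\ \forall k\}$. Critical direction: $u$ with $f_i^{\circ}(\bar x,u)\leqq0$ for all $i$, $=0$ for some $i$, and $g_j^{\circ}(\bar x,u)\leqq0$ for all $j\in J(\bar x)$; $\mathcal{C}(\bar x)$ is the set of these. Local Geoffrion properly efficient solution: there is a neighborhood $U$ of $\bar x$ such that (a) no $x\in U\cap Q_0$ has $f(x)\leqq f(\bar x)$ componentwise with $f(x)\ne f(\bar x)$, and (b) there is $M>0$ such that for every $i\in I$ and every $x\in U\cap Q_0$ with $f_i(x)<f_i(\bar x)$ there exists $j\in I$ with $f_j(x)>f_j(\bar x)$ and $\frac{f_i(\bar x)-f_i(x)}{f_j(x)-f_j(\bar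 x)}\leqq M$. *)

(* Defs.v *)
From Stdlib Require Import Reals Lra Classical ClassicalEpsilon.
Open Scope R_scope.

Record Banach := {
  car :> Type;
  bzero : car;
  badd : car -> car -> car;
  bopp : car -> car;
  bscal : R -> car -> car;
  bnorm : car -> R;
  badd_assoc : forall x y z, badd x (badd y z) = badd (badd x y) z;
  badd_comm : forall x y, badd x y = badd y x;
  badd_zero : forall x, badd x bzero = x;
  badd_opp : forall x, badd x (bopp x) = bzero;
  bscal_one : forall x, bscal 1 x = x;
  bscal_assoc : forall a b x, bscal a (bscal b x) = bscal (a * b) x;
  bscal_distr_l : forall a x y, bscal a (badd x y) = badd (bscal a x) (bscal a y);
  bscal_distr_r : forall a b x, bscal (a + b) x = badd (bscal a x) (bscal b x);
  bnorm_eq0 : forall x, bnorm x = 0 -> x = bzero;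
  bnorm_scal : forall a x, bnorm (bscal a x) = Rabs a * bnorm x;
  bnorm_triangle : forall x y, bnorm (badd x y) <= bnorm x + bnorm y;
  bcomplete : forall s : nat -> car,
    (forall eps, 0 < eps -> exists N, forall n k, (N <= n)%nat -> (N <= k)%nat ->
        bnorm (badd (s n) (bopp (s k))) < eps) ->
    exists l, forall eps, 0 < eps -> exists N, forall n, (N <= n)%nat ->
        bnorm (badd (s n) (bopp l)) < eps
}.

Arguments bzero {_}.
Arguments badd {_} _ _.
Arguments bopp {_} _.
Arguments bscal {_} _ _.
Arguments bnorm {_} _.

Definition bdist {X : Banach} (x y : X) : R := bnorm (badd x (bopp y)).

Inductive ERbar := Fin (r : R) | PInf | MInf.

Definition ER_le (a b : ERbar) : Prop :=
  match a, b with
  | MInf, _ => True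
  | _, PInf => True
  | Fin x, Fin y => x <= y
  | _, _ => False
  end.

Definition ER_lt (a b : ERbar) : Prop :=
  match a, b with
  | MInf, MInf => False
  | MInf, _ => True
  | PInf, _ => False
  | Fin _, PInf => True
  | Fin x, Fin y => x < y
  | Fin _, MInf => False
  end.

(* addition; the ambiguous case +oo + -oo never occurs in our uses
   (the first summand is always finite under the standing assumptions) *)
Definition ER_plus (a b : ERbar) : ERbar :=
  match a, b with
  | Fin x, Fin y => Fin (x + y)
  | PInf, _ => PInf
  | _, PInf => PInf
  | _, _ => MInf
  end.

Definition real_of (a : ERbar) : R := match a with Fin x => x | _ => 0 end.

Definition Rsup (E : R -> Prop) : ERbar :=
  match excluded_middle_informative (exists x, E x) with
  | left Hne =>
      match excluded_middle_informative (bound E) with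
      | left Hb => Fin (proj1_sig (completeness E Hb Hne))
      | right _ => PInf
      end
  | right _ => MInf
  end.

Definition Einf (E : ERbar -> Prop) : ERbar :=
  match excluded_middle_informative (E MInf) with
  | left _ => MInf
  | right _ =>
      let E' := fun y => E (Fin (- y)) in
      match excluded_middle_informative (exists y, E' y) with
      | left Hne =>
          match excluded_middle_informative (bound E') with
          | left Hb => Fin (- proj1_sig (completeness E' Hb Hne))
          | right _ => MInf
          end
      | right _ => PInf
      end
  end.

Definition limsup0 (h : R -> R) : ERbar :=
  Einf (fun s => exists d, 0 < d /\
          s = Rsup (fun y => exists t, 0 < t < d /\ y = h t)).

Definition clarke {X : Banach} (F : X -> R) (xb u : X) : ERbar :=
  Einf (fun s => exists d, 0 < d /\
          s = Rsup (fun y => exists (x : X) (t : R), bdist x xb < d /\ 0 < t < d /\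
                   y = (F (badd x (bscal t u)) - F x) / t)).

(* second-order derivative F°°(xb,u); F°(xb,u) is finite under the standing
   (local Lipschitz) assumptions, so real_of is faithful there *)
Definition clarke2 {X : Banach} (F : X -> R) (xb u : X) : ERbar :=
  limsup0 (fun t => (F (badd xb (bscal t u)) - F xb - t * real_of (clarke F xb u))
                    / (/2 * t ^ 2)).

Definition second_pair {X : Banach} (F : X -> R) (xb u v : X) : ERbar * ERbar :=
  (clarke F xb u, ER_plus (clarke F xb v) (clarke2 F xb u)).

Definition lex_le0 (a : ERbar * ERbar) : Prop :=
  ER_lt (fst a) (Fin 0) \/ (fst a = Fin 0 /\ ER_le (snd a) (Fin 0)).
Definition lex_lt0 (a : ERbar * ERbar) : Prop :=
  ER_lt (fst a) (Fin 0) \/ (fst a = Fin 0 /\ ER_lt (snd a) (Fin 0)).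

Definition loc_lipschitz {X : Banach} (F : X -> R) (xb : X) : Prop :=
  exists L d, 0 < d /\ forall x y : X, bdist x xb < d -> bdist y xb < d ->
    Rabs (F x - F y) <= L * bdist x y.

Definition continuous_at {X : Banach} (F : X -> R) (xb : X) : Prop :=
  forall eps, 0 < eps -> exists d, 0 < d /\ forall x : X, bdist x xb < d ->
    Rabs (F x - F xb) < eps.

(* ---------- the problem (VP): I = {0..p-1}, J = {0..m-1} ---------- *)
Section VP.
Context {X : Banach} (p m : nat) (f g : nat -> X -> R).

Definition Q0 (x : X) : Prop := forall j, (j < m)%nat -> g j x <= 0.

Definition active (xb : X) (j : nat) : Prop := (j < m)%nat /\ g j xb = 0.

Definition Qset (xb x : X) : Prop := Q0 x /\ forall i, (i < p)%nat -> f i x <= f i xb.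

Definition L2 (xb u v : X) : Prop :=
  (forall i, (i < p)%nat -> lex_le0 (second_pair (f i) xb u v)) /\
  (forall j, active xb j -> lex_le0 (second_pair (g j) xb u v)).

Definition critical (xb u : X) : Prop :=
  (forall i, (i < p)%nat -> ER_le (clarke (f i) xb u) (Fin 0)) /\
  (exists i, (i < p)%nat /\ clarke (f i) xb u = Fin 0) /\
  (forall j, active xb j -> ER_le (clarke (g j) xb u) (Fin 0)).

Definition geoffrion_local (xb : X) : Prop :=
  exists d, 0 < d /\
  (~ exists x, bdist x xb < d /\ Q0 x /\
        (forall i, (i < p)%nat -> f i x <= f i xb) /\
        (exists i, (i < p)%nat /\ f i x <> f i xb)) /\
  (exists M, 0 < M /\ forall i x, (i < p)%nat -> bdist x xb < d -> Q0 x ->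
      f i x < f i xb ->
      exists j, (j < p)%nat /\ f j x > f j xb /\
        (f i xb - f i x) / (f j x - f j xb) <= M).
End VP.

Definition T2 {X : Banach} (Om : X -> Prop) (xb u v : X) : Prop :=
  exists (t : nat -> R) (vk : nat -> X),
    (forall k, 0 < t k) /\ Un_cv t 0 /\
    (forall eps, 0 < eps -> exists N, forall k, (N <= k)%nat -> bdist (vk k) v < eps) /\
    (forall k, Om (badd xb (badd (bscal (t k) u) (bscal (/2 * (t k) ^ 2) (vk k))))).

(* Main.v *)
Require Import Defs.
From Stdlib Require Import Reals Lra Lia Classical ClassicalEpsilon.
Open Scope R_scope.

Arguments badd_assoc {_} _ _ _. Arguments badd_comm {_} _ _. Arguments badd_zero {_} _. Arguments badd_opp {_} _. Arguments bscal_one {_} _. Arguments bscal_assoc {_} _ _ _. Arguments bscal_distr_l {_} _ _ _. Arguments bscal_distr_r {_} _ _ _. Arguments bnorm_scal {_} _ _. Arguments bnorm_triangle {_} _ _.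
Section Alg.
Context {X : Banach}.
Implicit Types x y a b w : X.

Lemma add0l x : badd bzero x = x.
Proof. rewrite badd_comm; apply badd_zero. Qed.

Lemma opp_uniq x y : badd x y = bzero -> y = bopp x.
Proof.
  intro H. rewrite <- (badd_zero y), <- (badd_opp x), badd_assoc, (badd_comm y x), H.
  apply add0l.
Qed.

Lemma dbl0 a : a = badd a a -> a = bzero.
Proof.
  intro H. transitivity (badd (badd a a) (bopp a)).
  - rewrite <- badd_assoc, badd_opp, badd_zero; reflexivity.
  - rewrite <- H; apply badd_opp.
Qed.

Lemma scal0 x : bscal 0 x = bzero.
Proof. apply dbl0. rewrite <- bscal_distr_r. f_equal; ring. Qed.

Lemma opp_scal x : bopp x = bscal (-1) x.
Proof.
  symmetry. apply opp_uniq. rewrite <- (bscal_one x) at 1.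
  rewrite <- bscal_distr_r. replace (1 + -1) with 0 by ring. apply scal0.
Qed.

Lemma norm0 : bnorm (@bzero X) = 0.
Proof. rewrite <- (scal0 bzero), bnorm_scal, Rabs_R0; ring. Qed.

Lemma norm_opp x : bnorm (bopp x) = bnorm x.
Proof. rewrite opp_scal, bnorm_scal, (Rabs_left (-1)) by lra; ring. Qed.

Lemma norm_nonneg x : 0 <= bnorm x.
Proof.
  pose proof (bnorm_triangle x (bopp x)) as H.
  rewrite badd_opp, norm0, norm_opp in H. lra.
Qed.

Lemma opp_add a b : bopp (badd a b) = badd (bopp a) (bopp b).
Proof. rewrite !opp_scal. apply bscal_distr_l. Qed.

Lemma scal_sub c a b : bscal c (badd a (bopp b)) = badd (bscal c a) (bopp (bscal c b)).
Proof.
  rewrite !opp_scal, bscal_distr_l, !bscal_assoc. do 2 f_equal. ring.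
Qed.

Lemma bdist_shift a x y : bdist (badd a x) (badd a y) = bdist x y.
Proof.
  unfold bdist. f_equal. rewrite opp_add, (badd_comm a x), <- badd_assoc.
  rewrite (badd_assoc a), badd_opp, add0l. reflexivity.
Qed.

Lemma bdist_self_add a b : bdist (badd a b) a = bnorm b.
Proof.
  unfold bdist. f_equal. rewrite (badd_comm a b), <- badd_assoc, badd_opp, badd_zero.
  reflexivity.
Qed.

Lemma bdist_scal c x y : bdist (bscal c x) (bscal c y) = Rabs c * bdist x y.
Proof. unfold bdist. rewrite <- scal_sub. apply bnorm_scal. Qed.

Lemma bdist_refl x : bdist x x = 0.
Proof. unfold bdist. rewrite badd_opp. apply norm0. Qed.

Lemma norm_w_le w v : bnorm w <= bnorm v + bdist w v.
Proof.
  unfold bdist. pose proof (bnorm_triangle (badd w (bopp v)) v) as H.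
  rewrite <- badd_assoc, (badd_comm (bopp v) v), badd_opp, badd_zero in H. lra.
Qed.

Lemma xk_close xb u v w t : 0 < t -> t < 1 -> bdist w v < 1 ->
  bdist (badd xb (badd (bscal t u) (bscal (/2*t^2) w))) xb <= t*(bnorm u + bnorm v + 1).
Proof.
  intros H0 H1 Hw. rewrite bdist_self_add.
  pose proof (bnorm_triangle (bscal t u) (bscal (/2*t^2) w)) as H.
  rewrite !bnorm_scal in H. rewrite (Rabs_pos_eq t) in H by lra.
  rewrite (Rabs_pos_eq (/2*t^2)) in H by nra.
  pose proof (norm_w_le w v). pose proof (norm_nonneg u). pose proof (norm_nonneg v).
  pose proof (norm_nonneg w).
  assert (/2*t^2 <= t) by nra.
  assert (/2*t^2 * bnorm w <= t * (bnorm v + 1)) by nra.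
  nra.
Qed.

End Alg.

Lemma Einf_lt S r : ER_lt (Einf S) (Fin r) -> exists s, S s /\ ER_lt s (Fin r).
Proof.
  unfold Einf. destruct (excluded_middle_informative (S MInf)) as [HM|HM].
  - intros _. exists MInf; split; simpl; auto.
  - destruct (excluded_middle_informative (exists y, S (Fin (- y)))) as [Hne|Hne].
    + destruct (excluded_middle_informative (bound (fun y => S (Fin (- y))))) as [Hb|Hb].
      * destruct (completeness _ Hb Hne) as [sp [Hub Hlub]]. simpl. intro H.
        destruct (classic (exists y, S (Fin (- y)) /\ - r < y)) as [[y [Hy1 Hy2]]|Hn].
        -- exists (Fin (- y)); split; auto; simpl; lra.
        -- exfalso. assert (sp <= - r).
           { apply Hlub. intros y Hy. destruct (Rle_dec y (-r)); auto.
             exfalso; apply Hn; exists y; split; auto; lra. }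
           lra.
      * intros _. destruct (classic (exists y, S (Fin (- y)) /\ - r < y)) as [[y [Hy1 Hy2]]|Hn].
        -- exists (Fin (- y)); split; auto; simpl; lra.
        -- exfalso; apply Hb. exists (- r). intros y Hy. destruct (Rle_dec y (-r)); auto.
           exfalso; apply Hn; exists y; split; auto; lra.
    + simpl; tauto.
Qed.

Lemma Rsup_lt A r : ER_lt (Rsup A) (Fin r) -> forall y, A y -> y < r.
Proof.
  unfold Rsup. destruct (excluded_middle_informative (exists x, A x)) as [Hne|Hne].
  - destruct (excluded_middle_informative (bound A)) as [Hb|Hb].
    + destruct (completeness _ Hb Hne) as [sp [Hub Hlub]]. simpl. intros H y Hy.
      specialize (Hub y Hy). lra.
    + simpl; tauto.
  - intros _ y Hy. exfalso; apply Hne; eauto.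
Qed.

Lemma clarke_lt {X : Banach} (F : X -> R) xb w r : ER_lt (clarke F xb w) (Fin r) ->
  exists d, 0 < d /\ forall x t, bdist x xb < d -> 0 < t < d ->
    (F (badd x (bscal t w)) - F x) / t < r.
Proof.
  intro H. apply Einf_lt in H. destruct H as [s [[d [Hd ->]] Hs]].
  exists d; split; auto. intros x t Hx Ht. eapply Rsup_lt; eauto.
  exists x, t; repeat split; auto; lra.
Qed.

Lemma limsup0_lt h r : ER_lt (limsup0 h) (Fin r) ->
  exists d, 0 < d /\ forall t, 0 < t < d -> h t < r.
Proof.
  intro H. apply Einf_lt in H. destruct H as [s [[d [Hd ->]] Hs]].
  exists d; split; auto. intros t Ht. eapply Rsup_lt; eauto.
  exists t; split; auto.
Qed.

Lemma plus_le a b : ER_le (ER_plus a b) (Fin 0) -> forall e, 0 < e ->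
  exists ra rb, ER_lt a (Fin ra) /\ ER_lt b (Fin rb) /\ ra + rb < e.
Proof.
  intros H e He. destruct a as [x| |]; destruct b as [y| |]; simpl in H; try tauto.
  - exists (x + e/4), (y + e/4); simpl; repeat split; lra.
  - exists (x+1), (-x-2); simpl; repeat split; auto; lra.
  - exists (-y-2), (y+1); simpl; repeat split; auto; lra.
  - exists 0, (-1); simpl; repeat split; auto; lra.
Qed.

Lemma plus_lt a b : ER_lt (ER_plus a b) (Fin 0) ->
  exists ra rb, ER_lt a (Fin ra) /\ ER_lt b (Fin rb) /\ ra + rb < 0.
Proof.
  intros H. destruct a as [x| |]; destruct b as [y| |]; simpl in H; try tauto.
  - exists (x - (x+y)/4), (y - (x+y)/4); simpl; repeat split; lra.
  - exists (x+1), (-x-2); simpl; repeat split; auto; lra.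
  - exists (-y-2), (y+1); simpl; repeat split; auto; lra.
  - exists 0, (-1); simpl; repeat split; auto; lra.
Qed.

Lemma lt0_neg a : ER_lt a (Fin 0) -> exists r, r < 0 /\ ER_lt a (Fin r).
Proof.
  destruct a as [x| |]; simpl; intro H; try tauto.
  - exists (x/2); simpl; split; lra.
  - exists (-1); simpl; split; auto; lra.
Qed.

Lemma ER_lt_le a b : ER_lt a b -> ER_le a b.
Proof. destruct a, b; simpl; auto; lra. Qed.

Definition LIP {X : Banach} (F : X -> R) xb L d0 :=
  0 <= L /\ 0 < d0 /\ forall x y, bdist x xb < d0 -> bdist y xb < d0 -> F x - F y <= L * bdist x y.

Lemma lip_norm {X : Banach} (F : X -> R) xb : loc_lipschitz F xb -> exists L d0, LIP F xb L d0.
Proof.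
  intros [L [d [Hd H]]]. exists (Rmax L 0), d. split; [apply Rmax_r|split; auto].
  intros x y Hx Hy. specialize (H x y Hx Hy).
  assert (0 <= bdist x y) by apply norm_nonneg.
  assert (L * bdist x y <= Rmax L 0 * bdist x y) by (apply Rmult_le_compat_r; auto; apply Rmax_l).
  pose proof (Rle_abs (F x - F y)). lra.
Qed.

Lemma div_lt a s r : 0 < s -> a / s < r -> a < r * s.
Proof.
  intros Hs H. apply (Rmult_lt_compat_r s) in H; auto.
  replace (a / s * s) with a in H by (field; lra). exact H.
Qed.

Definition xk {X : Banach} (xb u : X) t (w : X) :=
  badd xb (badd (bscal t u) (bscal (/2*t^2) w)).

Lemma est1 {X : Banach} (F : X -> R) xb u v L d0 r1 :
  LIP F xb L d0 -> r1 < 0 -> ER_lt (clarke F xb u) (Fin r1) ->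
  exists d, 0 < d /\ forall t w, 0 < t < d -> bdist w v < 1 -> F (xk xb u t w) - F xb < 0.
Proof.
  intros [HL [Hd0 Hlip]] Hr1 Hc.
  destruct (clarke_lt _ _ _ _ Hc) as [d1 [Hd1 H1]].
  pose proof (norm_nonneg u). pose proof (norm_nonneg v).
  set (K := bnorm u + bnorm v + 1).
  assert (HK : 1 <= K) by (unfold K; lra).
  set (d := Rmin (Rmin 1 d1) (Rmin (d0/(2*K)) (-r1/((L+1)*K)))).
  assert (Hdpos : 0 < d).
  { unfold d. repeat apply Rmin_glb_lt; try lra; apply Rdiv_lt_0_compat; nra. }
  assert (Hd1' : d <= 1) by (unfold d; eapply Rle_trans; [apply Rmin_l|apply Rmin_l]).
  assert (Hd2' : d <= d1) by (unfold d; eapply Rle_trans; [apply Rmin_l|apply Rmin_r]).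
  assert (Hd3' : d <= d0/(2*K)) by (unfold d; eapply Rle_trans; [apply Rmin_r|apply Rmin_l]).
  assert (Hd4' : d <= -r1/((L+1)*K)) by (unfold d; eapply Rle_trans; [apply Rmin_r|apply Rmin_r]).
  assert (Hd3 : d * K <= d0/2).
  { apply (Rmult_le_compat_r K) in Hd3'; [|lra].
    replace (d0 / (2*K) * K) with (d0/2) in Hd3' by (field; lra). exact Hd3'. }
  assert (Hd4 : d * ((L+1)*K) <= -r1).
  { apply (Rmult_le_compat_r ((L+1)*K)) in Hd4'; [|nra].
    replace (-r1 / ((L+1)*K) * ((L+1)*K)) with (-r1) in Hd4' by (field; nra). exact Hd4'. }
  exists d; split; auto.
  intros t w [Ht0 Htd] Hw. unfold xk.
  set (s := /2*t^2).
  assert (Hs0 : 0 < s) by (unfold s; nra).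
  assert (Hst : s <= t/2) by (unfold s; nra).
  pose proof (xk_close xb u v w t Ht0 ltac:(lra) Hw) as Hxk. fold s in Hxk. fold K in Hxk.
  assert (t * K < d * K) by (apply Rmult_lt_compat_r; lra).
  assert (HtK : t * K < d0) by lra.
  assert (Hy : bdist (badd xb (bscal t u)) xb = t * bnorm u).
  { rewrite bdist_self_add, bnorm_scal, Rabs_pos_eq; lra. }
  assert (t * bnorm u <= t * K) by (apply Rmult_le_compat_l; unfold K; lra).
  assert (Hyd0 : bdist (badd xb (bscal t u)) xb < d0) by (rewrite Hy; lra).
  assert (Hxd0 : bdist (badd xb (badd (bscal t u) (bscal s w))) xb < d0) by lra.
  pose proof (Hlip _ _ Hxd0 Hyd0) as Hl.
  rewrite (badd_assoc xb), bdist_self_add, bnorm_scal, Rabs_pos_eq in Hl by lra.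
  rewrite <- (badd_assoc xb) in Hl.
  assert (Hxx : bdist xb xb < d1) by (rewrite bdist_refl; lra).
  pose proof (H1 xb t Hxx ltac:(lra)) as Hq. apply div_lt in Hq; [|lra].
  pose proof (norm_w_le w v). pose proof (norm_nonneg w).
  assert (bnorm w <= K) by (unfold K; lra).
  assert (L * (s * bnorm w) <= L * (t/2 * t * K)).
  { apply Rmult_le_compat_l; auto. assert (s = t/2*t) by (unfold s; field). nra. }
  assert (t * ((L+1)*K) < -r1) by nra.
  assert (L * (t/2*t*K) < - r1 * t) by nra.
  lra.
Qed.

Lemma est2 {X : Banach} (F : X -> R) xb u v L d0 ra rb eta :
  LIP F xb L d0 -> clarke F xb u = Fin 0 ->
  ER_lt (clarke F xb v) (Fin ra) -> ER_lt (clarke2 F xb u) (Fin rb) -> 0 < eta ->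
  exists d, 0 < d /\ forall t w, 0 < t < d -> bdist w v < d ->
    F (xk xb u t w) - F xb < (/2*t^2) * (ra + rb + eta).
Proof.
  intros [HL [Hd0 Hlip]] Hc Hv Hb Heta.
  destruct (clarke_lt _ _ _ _ Hv) as [d1 [Hd1 H1]].
  unfold clarke2 in Hb. rewrite Hc in Hb. change (real_of (Fin 0)) with 0 in Hb.
  destruct (limsup0_lt _ _ Hb) as [d2 [Hd2 H2]].
  pose proof (norm_nonneg u). pose proof (norm_nonneg v).
  set (K := bnorm u + bnorm v + 1).
  assert (HK : 1 <= K) by (unfold K; lra).
  set (m := Rmin d1 d0).
  assert (Hm : 0 < m) by (apply Rmin_glb_lt; lra).
  assert (Hm1 : m <= d1) by apply Rmin_l.
  assert (Hm2 : m <= d0) by apply Rmin_r.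
  set (d := Rmin (Rmin 1 d2) (Rmin (m/(2*K)) (eta/(2*(L+1))))).
  assert (Hdpos : 0 < d).
  { unfold d. repeat apply Rmin_glb_lt; try lra; apply Rdiv_lt_0_compat; nra. }
  assert (Hd1' : d <= 1) by (unfold d; eapply Rle_trans; [apply Rmin_l|apply Rmin_l]).
  assert (Hd2' : d <= d2) by (unfold d; eapply Rle_trans; [apply Rmin_l|apply Rmin_r]).
  assert (Hd3' : d <= m/(2*K)) by (unfold d; eapply Rle_trans; [apply Rmin_r|apply Rmin_l]).
  assert (Hd4' : d <= eta/(2*(L+1))) by (unfold d; eapply Rle_trans; [apply Rmin_r|apply Rmin_r]).
  assert (Hd3 : d * K <= m/2).
  { apply (Rmult_le_compat_r K) in Hd3'; [|lra].
    replace (m / (2*K) * K) with (m/2) in Hd3' by (field; lra). exact Hd3'. }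
  assert (Hd4 : d * (L+1) <= eta/2).
  { apply (Rmult_le_compat_r (L+1)) in Hd4'; [|lra].
    replace (eta / (2*(L+1)) * (L+1)) with (eta/2) in Hd4' by (field; lra). exact Hd4'. }
  exists d; split; auto.
  intros t w [Ht0 Htd] Hw. unfold xk.
  set (s := /2*t^2).
  assert (Hs0 : 0 < s) by (unfold s; nra).
  assert (Hst : s <= t/2) by (unfold s; nra).
  pose proof (xk_close xb u v w t Ht0 ltac:(lra) ltac:(lra)) as Hxk. fold s in Hxk. fold K in Hxk.
  pose proof (xk_close xb u v v t Ht0 ltac:(lra) ltac:(rewrite bdist_refl; lra)) as Hz.
  fold s in Hz. fold K in Hz.
  assert (t * K < d * K) by (apply Rmult_lt_compat_r; lra).
  assert (HtK : t * K < m) by lra.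
  assert (Hy : bdist (badd xb (bscal t u)) xb = t * bnorm u).
  { rewrite bdist_self_add, bnorm_scal, Rabs_pos_eq; lra. }
  assert (t * bnorm u <= t * K) by (apply Rmult_le_compat_l; unfold K; lra).
  assert (Hyd1 : bdist (badd xb (bscal t u)) xb < d1) by (rewrite Hy; lra).
  assert (Hxd0 : bdist (badd xb (badd (bscal t u) (bscal s w))) xb < d0) by lra.
  assert (Hzd0 : bdist (badd xb (badd (bscal t u) (bscal s v))) xb < d0) by lra.
  pose proof (Hlip _ _ Hxd0 Hzd0) as Hl.
  rewrite !bdist_shift, bdist_scal, Rabs_pos_eq in Hl by lra.
  assert (t <= t * K) by nra.
  pose proof (H1 (badd xb (bscal t u)) s Hyd1 ltac:(lra)) as Hq.
  apply div_lt in Hq; [|lra]. rewrite <- badd_assoc in Hq.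
  pose proof (H2 t ltac:(lra)) as Hr. apply div_lt in Hr; [|exact Hs0]. fold s in Hr.
  assert (L * d <= eta / 2) by nra.
  pose proof (norm_nonneg (badd w (bopp v))).
  assert (L * (s * bdist w v) <= s * (eta/2)).
  { unfold bdist in *. assert (L * bdist w v <= L * d) by (apply Rmult_le_compat_l; unfold bdist; lra).
    unfold bdist in *. nra. }
  assert (s*(ra+rb+eta) = ra*s + rb*s + s*eta) by ring.
  assert (s*(eta/2) < s*eta) by nra. lra.
Qed.

Lemma est_j {X : Banach} (F : X -> R) xb u v L d0 eps :
  LIP F xb L d0 -> lex_le0 (second_pair F xb u v) -> 0 < eps ->
  exists d, 0 < d /\ forall t w, 0 < t < d -> bdist w v < d ->
    F (xk xb u t w) - F xb < (/2*t^2) * eps.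
Proof.
  intros Hlip Hle He. destruct Hle as [Hlt|[Heq Hle]]; simpl in *.
  - destruct (lt0_neg _ Hlt) as [r1 [Hr1 Hc]].
    destruct (est1 F xb u v L d0 r1 Hlip Hr1 Hc) as [d [Hd H]].
    exists (Rmin d 1); split; [apply Rmin_glb_lt; lra|].
    intros t w Ht Hw. pose proof (Rmin_l d 1). pose proof (Rmin_r d 1).
    assert (0 < /2*t^2*eps) by (apply Rmult_lt_0_compat; nra).
    specialize (H t w ltac:(lra) ltac:(lra)). lra.
  - destruct (plus_le _ _ Hle (eps/2) ltac:(lra)) as [ra [rb [Ha [Hb Hab]]]].
    destruct (est2 F xb u v L d0 ra rb (eps/2) Hlip Heq Ha Hb ltac:(lra)) as [d [Hd H]].
    exists d; split; auto. intros t w Ht Hw. specialize (H t w Ht Hw).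
    assert (/2*t^2*(ra+rb+eps/2) < /2*t^2*eps) by (apply Rmult_lt_compat_l; nra).
    lra.
Qed.

Lemma est_i0 {X : Banach} (F : X -> R) xb u v L d0 :
  LIP F xb L d0 -> clarke F xb u = Fin 0 -> lex_lt0 (second_pair F xb u v) ->
  exists c, 0 < c /\ exists d, 0 < d /\ forall t w, 0 < t < d -> bdist w v < d ->
    F (xk xb u t w) - F xb < - ((/2*t^2) * c).
Proof.
  intros Hlip Hc Hlt. destruct Hlt as [Hlt|[_ Hlt]]; simpl in Hlt.
  - rewrite Hc in Hlt; simpl in Hlt; lra.
  - destruct (plus_lt _ _ Hlt) as [ra [rb [Ha [Hb Hab]]]].
    exists (-(ra+rb)/2); split; [lra|].
    destruct (est2 F xb u v L d0 ra rb (-(ra+rb)/2) Hlip Hc Ha Hb ltac:(lra)) as [d [Hd H]].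
    exists d; split; auto. intros t w Ht Hw. specialize (H t w Ht Hw).
    replace (- (/2*t^2 * (-(ra+rb)/2))) with (/2*t^2*(ra+rb+(-(ra+rb)/2))) by field.
    exact H.
Qed.

Definition ev (P : nat -> Prop) := exists N, forall k, (N <= k)%nat -> P k.

Lemma ev_and P Q : ev P -> ev Q -> ev (fun k => P k /\ Q k).
Proof.
  intros [N1 H1] [N2 H2]. exists (N1 + N2)%nat. intros k Hk. split; [apply H1|apply H2]; lia.
Qed.

Lemma ev_forall (P : nat -> nat -> Prop) n :
  (forall j, (j < n)%nat -> ev (P j)) -> ev (fun k => forall j, (j < n)%nat -> P j k).
Proof.
  induction n as [|n IH]; intro H.
  - exists 0%nat. intros; lia.
  - destruct (IH (fun j Hj => H j ltac:(lia))) as [N1 H1].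
    destruct (H n ltac:(lia)) as [N2 H2].
    exists (N1 + N2)%nat. intros k Hk j Hj.
    destruct (Nat.eq_dec j n) as [->|Hne]; [apply H2; lia|apply H1; lia].
Qed.

Theorem theorem5p1 (X : Banach) (p m : nat) (f g : nat -> X -> R) (xb : X)
  (Hxb : Q0 m g xb)
  (Hf : forall i, (i < p)%nat -> loc_lipschitz (f i) xb)
  (Hga : forall j, active m g xb j -> loc_lipschitz (g j) xb)
  (Hgn : forall j, (j < m)%nat -> g j xb <> 0 -> continuous_at (g j) xb)
  (Hgeo : geoffrion_local p m f g xb)
  (HL2 : forall u, critical p m f g xb u ->
           forall v, L2 p m f g xb u v -> T2 (Q0 m g) xb u v) :
  ~ exists u v : X,
      (forall i, (i < p)%nat -> lex_le0 (second_pair (f i) xb u v)) /\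
      (exists i, (i < p)%nat /\ clarke (f i) xb u = Fin 0 /\
                 lex_lt0 (second_pair (f i) xb u v)) /\
      (forall j, active m g xb j -> lex_le0 (second_pair (g j) xb u v)).
Proof.
  intros [u [v [Hfi [[i0 [Hi0 [Hc0 Hlt0]]] Hgj]]]].
  assert (Hcrit : critical p m f g xb u).
  { split; [|split].
    - intros i Hi. destruct (Hfi i Hi) as [H|[H _]]; simpl in H.
      + apply ER_lt_le; auto.
      + rewrite H; simpl; lra.
    - exists i0; auto.
    - intros j Hj. destruct (Hgj j Hj) as [H|[H _]]; simpl in H.
      + apply ER_lt_le; auto.
      + rewrite H; simpl; lra. }
  assert (HL : L2 p m f g xb u v) by (split; auto).
  destruct (HL2 u Hcrit v HL) as [t [vk [Ht [Htc [Hvk HQ]]]]].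
  destruct Hgeo as [dg [Hdg [_ [M [HM Hb]]]]].
  destruct (lip_norm _ _ (Hf i0 Hi0)) as [L0 [d00 Hlip0]].
  destruct (est_i0 _ _ _ _ _ _ Hlip0 Hc0 Hlt0) as [c [Hc Hi0e]].
  set (eps := c/(2*M)).
  assert (Heps : 0 < eps) by (unfold eps; apply Rdiv_lt_0_compat; lra).
  assert (to_ev : forall P : R -> X -> Prop,
    (exists d, 0 < d /\ forall t w, 0 < t < d -> bdist w v < d -> P t w) ->
    ev (fun k => P (t k) (vk k))).
  { intros P [d [Hd HP]]. destruct (Htc d Hd) as [N1 H1]. destruct (Hvk d Hd) as [N2 H2].
    exists (N1 + N2)%nat. intros k Hk. apply HP; [split|].
    - apply Ht.
    - specialize (H1 k ltac:(lia)). unfold R_dist in H1. rewrite Rminus_0_r in H1.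
      apply Rabs_def2 in H1. lra.
    - apply H2; lia. }
  assert (Hall : ev (fun k => forall j, (j < p)%nat ->
      f j (xk xb u (t k) (vk k)) - f j xb < /2 * t k ^ 2 * eps)).
  { apply ev_forall. intros j Hj.
    destruct (lip_norm _ _ (Hf j Hj)) as [L [d0 Hl]].
    apply (to_ev (fun t w => f j (xk xb u t w) - f j xb < /2 * t ^ 2 * eps)).
    apply (est_j _ _ _ _ _ _ _ Hl (Hfi j Hj) Heps). }
  assert (Hi : ev (fun k => f i0 (xk xb u (t k) (vk k)) - f i0 xb < - (/2 * t k ^ 2 * c))).
  { apply (to_ev (fun t w => f i0 (xk xb u t w) - f i0 xb < - (/2 * t ^ 2 * c))). exact Hi0e. }
  assert (Hcl : ev (fun k => bdist (xk xb u (t k) (vk k)) xb < dg)).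
  { apply (to_ev (fun t w => bdist (xk xb u t w) xb < dg)).
    pose proof (norm_nonneg u). pose proof (norm_nonneg v).
    set (K := bnorm u + bnorm v + 1).
    exists (Rmin 1 (dg / (2*K))). split.
    { apply Rmin_glb_lt; [lra|]. apply Rdiv_lt_0_compat; unfold K; lra. }
    intros t0 w Ht0 Hw. pose proof (Rmin_l 1 (dg/(2*K))). pose proof (Rmin_r 1 (dg/(2*K))).
    pose proof (xk_close xb u v w t0 ltac:(lra) ltac:(lra) ltac:(lra)) as Hx.
    fold K in Hx. unfold xk.
    assert (t0 * K < dg / (2*K) * K) by (apply Rmult_lt_compat_r; [unfold K; lra|lra]).
    replace (dg / (2*K) * K) with (dg/2) in H3 by (field; unfold K; lra).
    lra. }
  destruct (ev_and _ _ (ev_and _ _ Hall Hi) Hcl) as [N HN].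
  destruct (HN N (le_n N)) as [[HA HI] HC].
  set (x := xk xb u (t N) (vk N)) in *.
  set (s := /2 * t N ^ 2) in *.
  assert (Hs : 0 < s) by (unfold s; pose proof (Ht N); nra).
  assert (HQx : Q0 m g x) by apply HQ.
  destruct (Hb i0 x Hi0 HC HQx ltac:(nra)) as [j [Hj [Hgt Hrat]]].
  specialize (HA j Hj).
  set (A := f i0 xb - f i0 x) in *. set (D := f j x - f j xb) in *.
  assert (HD : 0 < D) by (unfold D; lra).
  assert (A <= M * D).
  { apply (Rmult_le_compat_r D) in Hrat; [|lra].
    replace (A / D * D) with A in Hrat by (field; lra). exact Hrat. }
  assert (M * D < M * (s * eps)) by (apply Rmult_lt_compat_l; lra).
  assert (M * (s * eps) = s * c / 2) by (unfold eps; field; lra).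
  assert (s * c < A) by (unfold A; lra).
  nra.
Qed.
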